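(* Let $\beta=(\beta_1,\ldots,\beta_\ell)$ be a composition of $N$ and let $\mathcal{Q}_\beta$ be the corresponding parabolic subposet of $1<\cdots<N$. Then $\mathcal{P}\mapsto\mathrm{fat}_\beta(\mathcal{P})$ is a bijection from the set of subposets of the total order $1<2<\cdots<\ell$ onto the set of Levi compatible subposets of $\mathcal{Q}_\beta$.
   Context: Fix a prime power $q$ and the finite field $\mathbb{F}_q$; $\mathrm{GL}_N=\mathrm{GL}_N(\mathbb{F}_q)$. A subposet of a poset $(X,\prec_{\mathcal{R}})$ is a strict partial order $\prec_{\mathcal{P}}$ on the same set with $a\prec_{\mathcal{P}}b\Rightarrow a\prec_{\mathcal{R}}b$. For a subposet $\mathcal{R}$ of $1<\cdots<N$, $\mathfrak{ut}_{\mathcal{R}}=\{x\in M_N(\mathbb{F}_q)\mid x_{ab}\ne0\Rightarrow a\prec_{\mathcal{R}}b\}$ and $\mathrm{UT}_{\mathcal{R}}=\mathrm{Id}_N+\mathfrak{ut}_{\mathcal{R}}$. For a composition $\beta=(\beta_1,\ldots,\beta_\ell)$ of $N$ let $\mathcal{Q}_i=\{\beta_1+\cdots+\beta_{i-1}+1,\ldots,\beta_1+\cdots+\beta_i\}$, and let $\mathcal{Q}_\beta$ be the poset on $\{1,\ldots,N\}$ with $a\prec b$ iff $a\in\mathcal{Q}_i,b\in\mathcal{Q}_j$, $i<j$. Let $L_\beta\cong\mathrm{GL}_{\beta_1}\times\cdots\times\mathrm{GL}_{\beta_\ell}$ be the block-diagonal subgroup of $\mathrm{GL}_N$ with diagonal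 blocks indexed by $\mathcal{Q}_1,\ldots,\mathcal{Q}_\ell$. A subposet $\mathcal{R}$ of $\mathcal{Q}_\beta$ is Levi compatible if $L_\beta\subseteq N_{\mathrm{GL}_N}(\mathrm{UT}_{\mathcal{R}})$. For a subposet $\mathcal{P}$ of $1<\cdots<\ell$, $\mathrm{fat}_\beta(\mathcal{P})$ is the subposet of $\mathcal{Q}_\beta$ with $a\prec b$ iff $a\in\mathcal{Q}_i$, $b\in\mathcal{Q}_j$ with $i\prec_{\mathcal{P}}j$. *)

(* Defs.v *)
From HB Require Import structures.
From mathcomp Require Import all_boot all_order all_algebra all_fingroup all_field.
Set Implicit Arguments. Unset Strict Implicit. Unset Printing Implicit Defensive.
Import GRing.Theory.
Local Open Scope ring_scope.

(* Relations on a finite set T are represented as sets of pairs: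
   (a, b) \in R  means  a <_R b. *)

Definition strict_po (T : finType) (R : {set T * T}) : Prop :=
  (forall a, (a, a) \notin R) /\
  (forall a b c, (a, b) \in R -> (b, c) \in R -> (a, c) \in R).

Definition subposet (T : finType) (P R : {set T * T}) : Prop :=
  strict_po P /\ P \subset R.

(* the total order 0 < 1 < ... < n-1 on 'I_n (i.e. 1 < ... < n, shifted) *)
Definition total_order (n : nat) : {set 'I_n * 'I_n} :=
  [set p : 'I_n * 'I_n | (p.1 < p.2)%N].

(* index a (0-based) lies in the i-th block Q_i (0-based) of the composition beta *)
Definition inQ (beta : seq nat) (i a : nat) : bool :=
  (sumn (take i beta) <= a < sumn (take i.+1 beta))%N.

Definition Qbeta (beta : seq nat) (N : nat) : {set 'I_N * 'I_N} :=
  [set p : 'I_N * 'I_N | [exists i : 'I_(size beta), exists j : 'I_(size beta),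
             [&& (i < j)%N, inQ beta i p.1 & inQ beta j p.2]]].

Definition fat (beta : seq nat) (N : nat) (P : {set 'I_(size beta) * 'I_(size beta)})
  : {set 'I_N * 'I_N} :=
  [set p : 'I_N * 'I_N | [exists i : 'I_(size beta), exists j : 'I_(size beta),
             [&& (i, j) \in P, inQ beta i p.1 & inQ beta j p.2]]].

Definition ut (F : finFieldType) (N : nat) (R : {set 'I_N * 'I_N}) : {set 'M[F]_N} :=
  [set x : 'M[F]_N | [forall a, forall b, (x a b != 0) ==> ((a, b) \in R)]].

Definition UT (F : finFieldType) (N : nat) (R : {set 'I_N * 'I_N}) : {set 'M[F]_N} :=
  [set 1%:M + x | x in ut F R].

Definition in_Levi (F : finFieldType) (beta : seq nat) (N : nat) (g : 'M[F]_N) : Prop :=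
  g \in unitmx /\
  (forall a b : 'I_N, g a b != 0 ->
     exists i : 'I_(size beta), inQ beta i a && inQ beta i b).

Definition normalizes (F : finFieldType) (N : nat) (g : 'M[F]_N) (S : {set 'M[F]_N}) : Prop :=
  [set g *m u *m invmx g | u in S] = S.

Definition Levi_compatible (F : finFieldType) (beta : seq nat) (N : nat)
  (R : {set 'I_N * 'I_N}) : Prop :=
  subposet R (Qbeta beta N) /\
  (forall g : 'M[F]_N, in_Levi beta g -> normalizes g (UT F R)).

Arguments fat beta N P : clear implicits.
Arguments Levi_compatible F beta N R : clear implicits.

(* Main.v *)
Require Import Defs.
From HB Require Import structures.
From mathcomp Require Import all_boot all_order all_algebra all_fingroup all_field.
From mathcomp Require Import zify.
Set Implicit Arguments. Unset Strict Implicit. Unset Printing Implicit Defensive.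
Import GRing.Theory.

Lemma sumn_take_mono (s : seq nat) m n : (m <= n)%N -> (sumn (take m s) <= sumn (take n s))%N.
Proof. by move=> /subnKC <-; rewrite takeD sumn_cat leq_addr. Qed.

Lemma inQ_uniq beta i j a : inQ beta i a -> inQ beta j a -> i = j.
Proof.
rewrite /inQ => /andP[h1 h2] /andP[h3 h4].
case: (ltngtP i j) => // hij.
- have := sumn_take_mono beta hij; lia.
- have := sumn_take_mono beta hij; lia.
Qed.

Definition sb beta (x y : nat) := forall k, inQ beta k x = inQ beta k y.

Lemma sb_of beta i x y : inQ beta i x -> inQ beta i y -> sb beta x y.
Proof.
move=> hx hy k; apply/idP/idP => h.
- by rewrite (inQ_uniq h hx).
- by rewrite (inQ_uniq h hy).
Qed.

Lemma inQ_exists beta a : (a < sumn beta)%N -> exists2 i, (i < size beta)%N & inQ beta i a.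
Proof.
elim: beta a => [|b s IH] a //=.
case: (ltnP a b) => hab ha.
- by exists 0%N => //; rewrite /inQ /=; lia.
- have [i hi hq] := IH (a - b)%N ltac:(lia).
  exists i.+1 => //; move: hq; rewrite /inQ /=; lia.
Qed.

Lemma inQ_first beta i : all (fun b => 0 < b)%N beta -> (i < size beta)%N ->
  inQ beta i (sumn (take i beta)) /\ (sumn (take i beta) < sumn beta)%N.
Proof.
move=> hp hi.
have hn := (all_nthP 0%N hp) i hi.
have e : sumn (take i.+1 beta) = (sumn (take i beta) + nth 0%N beta i)%N
  by rewrite (take_nth 0%N hi) sumn_rcons.
have := sumn_take_mono beta (leq_trans hi (leqnn (size beta))).
have := sumn_take_mono beta hi. rewrite take_size.
rewrite /inQ /= e => h1 _; split; first by rewrite leqnn /=; lia.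
lia.
Qed.

Local Open Scope ring_scope.

Definition bd (F : finFieldType) (beta : seq nat) (N : nat) (g : 'M[F]_N) : Prop :=
  forall a b : 'I_N, g a b != 0 ->
     exists i : 'I_(size beta), inQ beta i a && inQ beta i b.

Lemma sum_nz (F : finFieldType) (I : finType) (f : I -> F) :
  \sum_i f i != 0 -> exists i, f i != 0.
Proof.
move=> h; apply/existsP; apply: contraR h => /existsPn H.
by rewrite big1 // => i _; move: (H i); rewrite negbK => /eqP.
Qed.

Lemma mul_nz (F : finFieldType) (x y : F) : x * y != 0 -> (x != 0) /\ (y != 0).
Proof. by rewrite mulf_eq0 negb_or => /andP. Qed.

Definition Eb (F : finFieldType) beta N (k : nat) : 'M[F]_N :=
  diag_mx (\row_(c < N) ((inQ beta k c)%:R : F)).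

Lemma bd_comm (F : finFieldType) beta N (g : 'M[F]_N) k :
  bd beta g -> g *m Eb F beta N k = Eb F beta N k *m g.
Proof.
move=> hg; apply/matrixP => x y; rewrite mul_mx_diag mul_diag_mx !mxE.
case: (eqVneq (g x y) 0) => [->|nz]; first by rewrite mul0r mulr0.
have [i /andP[hx hy]] := hg _ _ nz.
by rewrite (sb_of hx hy k) mulrC.
Qed.

Lemma bd_inv (F : finFieldType) beta N (g : 'M[F]_N) :
  sumn beta = N -> g \in unitmx -> bd beta g -> bd beta (invmx g).
Proof.
move=> hsum gu hg x y nz.
have [k hk hy] := @inQ_exists beta (y : nat) ltac:(rewrite hsum; exact: ltn_ord).
exists (Ordinal hk) => /=; rewrite hy andbT.
set h := invmx g; set E := Eb F beta N k.
have e1 : E = h *m (E *m g) by rewrite -bd_comm // mulKmx.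
have e2 : E *m h = h *m E.
  by rewrite {1}e1 -!mulmxA mulmxV // mulmx1.
move/matrixP: e2 => /(_ x y); rewrite /E /Eb mul_mx_diag mul_diag_mx !mxE hy mulr1.
by case: (inQ beta k x) => //; rewrite mul0r => e; move: nz; rewrite /h -e eqxx.
Qed.

Lemma conj_ut (F : finFieldType) beta N P (g h x : 'M[F]_N) :
  bd beta g -> bd beta h -> x \in ut F (fat beta N P) ->
  g *m x *m h \in ut F (fat beta N P).
Proof.
move=> hg hh hx; rewrite inE; apply/forallP=> a; apply/forallP => b; apply/implyP.
rewrite !mxE => /sum_nz[d] /mul_nz[]; rewrite !mxE => /sum_nz[c] /mul_nz[gac xcd] hdb.
move: hx; rewrite inE => /forallP/(_ c)/forallP/(_ d)/implyP/(_ xcd).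
rewrite !inE => /existsP[i1 /existsP[j1 /and3P[hP hc hd]]].
have [i0 /andP[h1 h2]] := hg _ _ gac.
have [k /andP[h3 h4]] := hh _ _ hdb.
apply/existsP; exists i1; apply/existsP; exists j1; rewrite hP /=.
by rewrite (sb_of h1 h2) hc -(sb_of h3 h4) hd.
Qed.

Lemma fat_Levi (F : finFieldType) (N : nat) (beta : seq nat) (hsum : sumn beta = N)
  (P : {set 'I_(size beta) * 'I_(size beta)}) :
  subposet P (total_order (size beta)) -> Levi_compatible F beta N (fat beta N P).
Proof.
move=> [[Pirr Ptr] Ptot]; split; first split; first split.
- move=> a; rewrite inE; apply/negP => /existsP[i /existsP[j /and3P[hP ha hb]]].
  have e : i = j by apply: val_inj; exact: inQ_uniq ha hb.
  by subst j; move: (Pirr i); rewrite hP.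
- move=> a b c; rewrite !inE => /existsP[i /existsP[j /and3P[hP ha hb]]].
  move=> /existsP[j' /existsP[k /and3P[hP' hb' hc]]].
  have e : j = j' by apply: val_inj; exact: inQ_uniq hb hb'.
  subst j'; apply/existsP; exists i; apply/existsP; exists k.
  by rewrite (Ptr _ _ _ hP hP') ha hc.
- apply/subsetP => -[a b]; rewrite !inE => /existsP[i /existsP[j /and3P[hP ha hb]]].
  apply/existsP; exists i; apply/existsP; exists j; rewrite ha hb andbT.
  by have := subsetP Ptot _ hP; rewrite inE andbT.
- move=> g [gu gbd]; have hbd := bd_inv hsum gu gbd.
  have inj : injective (fun u : 'M[F]_N => g *m u *m invmx g).
    move=> u v e.
    have := congr1 (fun M => invmx g *m (M *m g)) e.
    by rewrite /= !mulmxKV // !mulKmx.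
  rewrite /normalizes; apply/eqP; rewrite eqEcard (card_imset _ inj) leqnn andbT.
  apply/subsetP => v /imsetP[u /imsetP[x xU ->] ->].
  apply/imsetP; exists (g *m x *m invmx g); first exact: conj_ut.
  by rewrite mulmxDr mulmxDl mulmx1 mulmxV.
Qed.
Lemma fat_inj (N : nat) (beta : seq nat)
  (hpos : all (fun b => 0 < b)%N beta) (hsum : sumn beta = N)
  (P1 P2 : {set 'I_(size beta) * 'I_(size beta)}) :
  fat beta N P1 = fat beta N P2 -> P1 \subset P2.
Proof.
move=> e; apply/subsetP => -[i j] hij.
have [ha0 hlta] := inQ_first hpos (ltn_ord i).
have [hb0 hltb] := inQ_first hpos (ltn_ord j).
rewrite hsum in hlta hltb.
have : (Ordinal hlta, Ordinal hltb) \in fat beta N P1.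
  by rewrite inE; apply/existsP; exists i; apply/existsP; exists j; rewrite hij ha0 hb0.
rewrite e inE => /existsP[i' /existsP[j' /and3P[hP ha hb]]].
have e1 : i' = i by apply: val_inj; exact: inQ_uniq ha ha0.
have e2 : j' = j by apply: val_inj; exact: inQ_uniq hb hb0.
by subst.
Qed.

Lemma tperm_sb beta N (c d x : 'I_N) : sb beta c d -> sb beta (tperm c d x) x.
Proof. by move=> h k; case: tpermP => [->|->|//]; rewrite h. Qed.

Lemma R_lt N beta (R : {set 'I_N * 'I_N}) (a b : 'I_N) (i j : nat) :
  R \subset Qbeta beta N -> (a, b) \in R -> inQ beta i a -> inQ beta j b -> (i < j)%N.
Proof.
move=> RQ hab ha hb; have := subsetP RQ _ hab.
rewrite inE => /existsP[i' /existsP[j' /and3P[hij ha' hb']]].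
by rewrite (inQ_uniq ha ha') (inQ_uniq hb hb').
Qed.

Lemma block_full (F : finFieldType) (N : nat) (beta : seq nat) (hsum : sumn beta = N)
  (R : {set 'I_N * 'I_N}) :
  R \subset Qbeta beta N ->
  (forall g : 'M[F]_N, in_Levi beta g -> normalizes g (UT F R)) ->
  forall a b a' b' : 'I_N, (a', b') \in R -> sb beta a a' -> sb beta b b' -> (a, b) \in R.
Proof.
move=> RQ Rnorm a b a' b' hR sa sb'.
have := subsetP RQ _ hR; rewrite inE => /existsP[i /existsP[j /and3P[hij ha' hb']]].
have ha : inQ beta i a by rewrite sa.
have hb : inQ beta j b by rewrite sb'.
have ne : forall x y : 'I_N, inQ beta i x -> inQ beta j y -> x != y.
  move=> x y hx hy; apply/eqP => exy; subst y.
  by have := inQ_uniq hx hy => /val_inj e; move: hij; rewrite e ltnn.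
set s := (tperm a a' * tperm b b')%g.
have sa' : s a = a' by rewrite /s permM tpermL tpermD // eq_sym ne.
have sb0 : s b = b'.
  by rewrite /s permM (tpermD (ne _ _ ha hb) (ne _ _ ha' hb)) tpermL.
set g : 'M[F]_N := perm_mx s.
have gu : g \in unitmx by exact: unitmx_perm.
have ginv : invmx g = perm_mx s^-1.
  have := mulKmx gu (perm_mx s^-1).
  by rewrite -perm_mxM mulgV perm_mx1 mulmx1.
have hL : in_Levi beta g.
  split=> // x y; rewrite /g /perm_mx !mxE.
  case: (eqVneq (s x) y) => [<- _|]; last by rewrite mulr0n eqxx.
  have [k hk hx] := @inQ_exists beta (x : nat) ltac:(rewrite hsum; exact: ltn_ord).
  exists (Ordinal hk) => /=; rewrite hx /= /s permM.
  rewrite tperm_sb ?tperm_sb //.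
set u : 'M[F]_N := 1%:M + delta_mx a' b'.
have uU : u \in UT F R.
  apply/imsetP; exists (delta_mx a' b') => //.
  rewrite inE; apply/forallP => x; apply/forallP => y; apply/implyP; rewrite mxE.
  by case: (eqVneq x a') => [->|]; case: (eqVneq y b') => [->|] //=; rewrite eqxx.
have : g *m u *m invmx g \in UT F R by rewrite -(Rnorm g hL); apply/imsetP; exists u.
case/imsetP => x xU ex.
have : x a b != 0.
  have -> : x = g *m u *m invmx g - 1%:M by rewrite ex addrC addKr.
  rewrite ginv -col_permE /g -row_permE !mxE sa' sb0 (negbTE (ne _ _ ha hb)).
  by rewrite (negbTE (ne _ _ ha' hb')) !eqxx /= subr0 add0r oner_neq0.
by move: xU; rewrite inE => /forallP/(_ a)/forallP/(_ b)/implyP.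
Qed.

Theorem mainTheorem3 (F : finFieldType) (N : nat) (beta : seq nat)
  (hpos : all (fun b => 0 < b)%N beta) (hsum : sumn beta = N) :
  (forall P : {set 'I_(size beta) * 'I_(size beta)},
     subposet P (total_order (size beta)) -> Levi_compatible F beta N (fat beta N P)) /\
  (forall P1 P2 : {set 'I_(size beta) * 'I_(size beta)},
     subposet P1 (total_order (size beta)) -> subposet P2 (total_order (size beta)) ->
     fat beta N P1 = fat beta N P2 -> P1 = P2) /\
  (forall R : {set 'I_N * 'I_N}, Levi_compatible F beta N R ->
     exists2 P : {set 'I_(size beta) * 'I_(size beta)},
       subposet P (total_order (size beta)) & R = fat beta N P).
Proof.
split; first by move=> P; exact: fat_Levi.
split.
  move=> P1 P2 _ _ e; apply/eqP; rewrite eqEsubset.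
  by rewrite (fat_inj hpos hsum e) (fat_inj hpos hsum (esym e)).
move=> R [[[Rirr Rtr] RQ] Rnorm].
have bf := block_full hsum RQ Rnorm.
have blk : forall x : 'I_N, exists i : 'I_(size beta), inQ beta i x.
  move=> x; have [k hk hx] := @inQ_exists beta (x : nat) ltac:(rewrite hsum; exact: ltn_ord).
  by exists (Ordinal hk).
set P := [set p : 'I_(size beta) * 'I_(size beta) | [exists a : 'I_N, exists b : 'I_N,
             [&& (a, b) \in R, inQ beta p.1 a & inQ beta p.2 b]]].
have eR : R = fat beta N P.
  apply/setP => -[a b]; rewrite !inE; apply/idP/idP.
  - move=> hab; have [i ha] := blk a; have [j hb] := blk b.
    apply/existsP; exists i; apply/existsP; exists j; rewrite ha hb !andbT inE.
    by apply/existsP; exists a; apply/existsP; exists b; rewrite hab ha hb.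
  - move=> /existsP[i /existsP[j /and3P[]]].
    rewrite inE => /existsP[a' /existsP[b' /and3P[hR ha' hb']]] ha hb.
    exact: bf hR (sb_of ha ha') (sb_of hb hb').
exists P => //.
have Plt : forall i j, (i, j) \in P -> (i < j)%N.
  move=> i j; rewrite inE => /existsP[a /existsP[b /and3P[hR ha hb]]].
  exact: R_lt RQ hR ha hb.
split; first split.
- by move=> i; apply/negP => /Plt; rewrite ltnn.
- move=> i j k; rewrite !inE => /existsP[a /existsP[b /and3P[hR ha hb]]].
  move=> /existsP[b' /existsP[c /and3P[hR' hb' hc]]].
  have hbc := bf _ _ _ _ hR' (sb_of hb hb') (fun k => erefl).
  apply/existsP; exists a; apply/existsP; exists c; rewrite ha hc !andbT.
  exact: Rtr hR hbc.
- by apply/subsetP => -[i j] /Plt; rewrite inE.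
Qed.
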